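(* Let $\mathcal{X}$ and $\mathcal{B}$ be categories with finite limits, and let $L : \mathcal{X}\to\mathcal{B}$ be a functor with a fully faithful right adjoint $R$. Then $L$ is a Street fibration if and only if the adjunction $L\dashv R$ is semi-left-exact.
   Context: Let $\sigma$ be the unit of $L\dashv R$. The adjunction is semi-left-exact if for every pullback square in $\mathcal{X}$ with vertex $Y$ of a cospan $X \xrightarrow{\sigma_X} R(LX) \xleftarrow{g} RB$ (with $X\in\mathcal{X}$, $B\in\mathcal{B}$), the projection $u : Y \to RB$ is sent by $L$ to an isomorphism $Lu$. A Street fibration is a functor isomorphic to the composite of an equivalence followed by a Grothendieck fibration (equivalently, a functor admitting cartesian lifts in the up-to-isomorphism sense). *)

(* Defs.v *)
Set Implicit Arguments.
Unset Strict Implicit.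

Record Category := {
  ob :> Type;
  hom : ob -> ob -> Type;
  idm : forall a, hom a a;
  comp : forall a b c, hom b c -> hom a b -> hom a c;
  comp_id_l : forall a b (f : hom a b), comp (idm b) f = f;
  comp_id_r : forall a b (f : hom a b), comp f (idm a) = f;
  comp_assoc : forall a b c d (f : hom a b) (g : hom b c) (h : hom c d),
      comp h (comp g f) = comp (comp h g) f
}.
Arguments hom {C} : rename.
Arguments idm {C} a : rename.
Arguments comp {C a b c} : rename.
Notation "g \o f" := (comp g f) (at level 40, left associativity).

Record Functor (C D : Category) := {
  fobj :> C -> D;
  fmap : forall a b, @hom C a b -> @hom D (fobj a) (fobj b);
  fmap_id : forall a, fmap (idm a) = idm (fobj a);
  fmap_comp : forall a b c (f : @hom C a b) (g : @hom C b c),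
      fmap (g \o f) = fmap g \o fmap f
}.
Arguments fmap {C D} F {a b} : rename.

Definition is_iso (C : Category) (a b : C) (f : hom a b) : Prop :=
  exists g : hom b a, g \o f = idm a /\ f \o g = idm b.

Definition is_terminal (C : Category) (t : C) : Prop :=
  forall x : C, exists! f : hom x t, True.

Definition is_pullback (C : Category) (P A B Z : C)
    (p1 : hom P A) (p2 : hom P B) (f : hom A Z) (g : hom B Z) : Prop :=
  f \o p1 = g \o p2 /\
  forall (Q : C) (q1 : hom Q A) (q2 : hom Q B), f \o q1 = g \o q2 ->
    exists! m : hom Q P, p1 \o m = q1 /\ p2 \o m = q2.

Definition has_finite_limits (C : Category) : Prop :=
  (exists t : C, is_terminal t) /\
  forall (A B Z : C) (f : hom A Z) (g : hom B Z),
    exists (P : C) (p1 : hom P A) (p2 : hom P B), is_pullback p1 p2 f g.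

Definition fully_faithful (C D : Category) (F : Functor C D) : Prop :=
  forall a b : C,
    (forall f g : hom a b, fmap F f = fmap F g -> f = g) /\
    (forall h : hom (F a) (F b), exists f : hom a b, fmap F f = h).

Definition is_adjunction (X B : Category) (L : Functor X B) (R : Functor B X)
    (sigma : forall x : X, hom x (R (L x)))
    (eps : forall b : B, hom (L (R b)) b) : Prop :=
  (forall (x y : X) (f : hom x y), sigma y \o f = fmap R (fmap L f) \o sigma x) /\
  (forall (a b : B) (f : hom a b), eps b \o fmap L (fmap R f) = f \o eps a) /\
  (forall x : X, eps (L x) \o fmap L (sigma x) = idm (L x)) /\
  (forall b : B, fmap R (eps b) \o sigma (R b) = idm (R b)).

Definition semi_left_exact (X B : Category) (L : Functor X B) (R : Functor B X)
    (sigma : forall x : X, hom x (R (L x))) : Prop :=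
  forall (x : X) (b : B) (g : hom (R b) (R (L x)))
         (y : X) (v : hom y x) (u : hom y (R b)),
    is_pullback v u (sigma x) g -> is_iso (fmap L u).

Definition is_cartesian (E B : Category) (P : Functor E B) (e' e : E)
    (g : hom e' e) : Prop :=
  forall (e'' : E) (h : hom e'' e) (k : hom (P e'') (P e')),
    fmap P g \o k = fmap P h ->
    exists! m : hom e'' e', g \o m = h /\ fmap P m = k.

Definition street_fibration (E B : Category) (P : Functor E B) : Prop :=
  forall (e : E) (b : B) (f : hom b (P e)),
    exists (e' : E) (g : hom e' e) (phi : hom b (P e')),
      is_cartesian P g /\ is_iso phi /\ fmap P g \o phi = f.
Arguments is_adjunction {X B} L R sigma eps.
Arguments semi_left_exact {X B} L R sigma.
Arguments street_fibration {E B} P.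
Arguments fully_faithful {C D} F.

(* Main.v *)
Require Import Defs.

Section Helpers.
Variables (X B : Category) (L : Functor X B) (R : Functor B X)
    (sigma : forall x : X, hom x (R (L x)))
    (eps : forall b : B, hom (L (R b)) b).
Hypothesis Hadj : is_adjunction L R sigma eps.

Lemma nat_s : forall (x y : X) (f : hom x y), sigma y \o f = fmap R (fmap L f) \o sigma x.
Proof. apply Hadj. Qed.
Lemma nat_e : forall (a b : B) (f : hom a b), eps b \o fmap L (fmap R f) = f \o eps a.
Proof. apply Hadj. Qed.
Lemma tri1 : forall x : X, eps (L x) \o fmap L (sigma x) = idm (L x).
Proof. apply Hadj. Qed.
Lemma tri2 : forall b : B, fmap R (eps b) \o sigma (R b) = idm (R b).
Proof. apply Hadj. Qed.

Lemma transp_eq (a : X) (b : B) (w : hom a (R b)) :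
  fmap R (eps b \o fmap L w) \o sigma a = w.
Proof.
  rewrite fmap_comp, <- comp_assoc, <- nat_s, comp_assoc, tri2, comp_id_l.
  reflexivity.
Qed.

Lemma transp_inj (a : X) (c : B) (w : hom (L a) c) :
  eps c \o fmap L (fmap R w \o sigma a) = w.
Proof.
  rewrite fmap_comp, comp_assoc, nat_e, <- comp_assoc, tri1, comp_id_r.
  reflexivity.
Qed.

Lemma Lv_eq (y x : X) (v : hom y x) :
  fmap L v = eps (L x) \o fmap L (sigma x \o v).
Proof.
  rewrite fmap_comp, comp_assoc, tri1, comp_id_l. reflexivity.
Qed.

Lemma eps_iso : fully_faithful R -> forall b, is_iso (eps b).
Proof.
  intros HFF b.
  destruct (HFF b (L (R b))) as [_ Hfull].
  destruct (Hfull (sigma (R b))) as [d Hd].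
  destruct (HFF b b) as [Hfaith _].
  exists d. split.
  -
    rewrite <- (transp_inj (R b) (L (R b)) (d \o eps b)).
    transitivity (eps (L (R b)) \o fmap L (fmap R (idm (L (R b))) \o sigma (R b)));
      [| apply transp_inj].
    f_equal. f_equal.
    rewrite fmap_comp, Hd, <- comp_assoc, tri2, comp_id_r, fmap_id, comp_id_l.
    reflexivity.
  - apply Hfaith. rewrite fmap_comp, Hd, tri2, fmap_id. reflexivity.
Qed.

End Helpers.

Lemma iso_comp (C : Category) (a b c : C) (f : hom a b) (g : hom b c) :
  is_iso f -> is_iso g -> is_iso (g \o f).
Proof.
  intros [f' [Hf1 Hf2]] [g' [Hg1 Hg2]].
  exists (f' \o g'). split.
  - rewrite comp_assoc, <- (comp_assoc g g' f'), Hg1, comp_id_r, Hf1. reflexivity.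
  - rewrite comp_assoc, <- (comp_assoc f' f g), Hf2, comp_id_r, Hg2. reflexivity.
Qed.

Theorem lemma5p2 (X B : Category) (L : Functor X B) (R : Functor B X)
    (sigma : forall x : X, hom x (R (L x)))
    (eps : forall b : B, hom (L (R b)) b) :
  has_finite_limits X -> has_finite_limits B ->
  is_adjunction L R sigma eps -> fully_faithful R ->
  (street_fibration L <-> semi_left_exact L R sigma).
Proof.
  intros [_ HpbX] _ Hadj HFF.
  pose proof (nat_s _ _ _ _ _ _ Hadj) as Ns.
  pose proof (nat_e _ _ _ _ _ _ Hadj) as Ne.
  split.
  - intros Hfib x b g y v u [Hsq Huniv].
    destruct (HFF b (L x)) as [_ Hfull].
    destruct (Hfull g) as [g' Hg']. subst g.
    destruct (Hfib x b g') as [e' [c [phi [Hcart [[phiinv [Hp1 Hp2]] Hcomm]]]]].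
    assert (Heq : sigma x \o c = fmap R g' \o (fmap R phiinv \o sigma e')).
    { rewrite Ns, <- Hcomm, comp_assoc, <- fmap_comp, <- comp_assoc, Hp2, comp_id_r.
      reflexivity. }
    destruct (Huniv e' c _ Heq) as [t [[Ht1 Ht2] _]].
    assert (HLv : fmap L v = g' \o (eps b \o fmap L u)).
    { rewrite (Lv_eq _ _ _ _ _ _ Hadj), Hsq, fmap_comp, comp_assoc, Ne, comp_assoc. reflexivity. }
    assert (Hk : fmap L c \o (phi \o (eps b \o fmap L u)) = fmap L v).
    { rewrite HLv, comp_assoc, Hcomm. reflexivity. }
    destruct (Hcart y v _ Hk) as [s [[Hs1 Hs2] _]].
    assert (Hts : t \o s = idm y).
    { destruct (Huniv y v u Hsq) as [m0 [_ Hm0u]].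
      transitivity m0; [symmetry|]; apply Hm0u; split.
      - rewrite comp_assoc, Ht1, Hs1. reflexivity.
      - rewrite comp_assoc, Ht2, <- comp_assoc, Ns, comp_assoc, <- fmap_comp, Hs2,
          comp_assoc, Hp1, comp_id_l, (transp_eq _ _ _ _ _ _ Hadj). reflexivity.
      - apply comp_id_r.
      - apply comp_id_r. }
    assert (Hepst : eps b \o (fmap L u \o fmap L t) = phiinv).
    { rewrite <- fmap_comp, Ht2, (transp_inj _ _ _ _ _ _ Hadj). reflexivity. }
    destruct (eps_iso _ _ _ _ _ _ Hadj HFF b) as [einv [He1 He2]].
    exists (fmap L t \o (phi \o eps b)). split.
    + rewrite <- !comp_assoc, <- Hs2, <- fmap_comp, Hts, fmap_id. reflexivity.
    + rewrite <- (comp_id_l (fmap L u \o _)), <- He1.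
      rewrite <- comp_assoc, !comp_assoc.
      rewrite <- (comp_assoc (fmap L u) (eps b) einv).
      rewrite <- (comp_assoc (fmap L t) (eps b \o fmap L u) einv).
      rewrite comp_assoc in Hepst. rewrite Hepst.
      rewrite <- (comp_assoc phi phiinv einv), Hp1, comp_id_r, He1. reflexivity.
  - intros Hsle e b f.
    destruct (HpbX _ _ _ (sigma e) (fmap R f)) as [P [p1 [p2 [Hsq Huniv]]]].
    pose proof (Hsle e b (fmap R f) P p1 p2 (conj Hsq Huniv)) as HLu.
    pose (c := eps b \o fmap L p2).
    assert (Hc : is_iso c) by (apply iso_comp; [exact HLu | exact (eps_iso _ _ _ _ _ _ Hadj HFF b)]).
    destruct Hc as [phi [Hc1 Hc2]].
    assert (HLv : fmap L p1 = f \o c).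
    { unfold c. rewrite (Lv_eq _ _ _ _ _ _ Hadj), Hsq, fmap_comp, comp_assoc, Ne, comp_assoc. reflexivity. }
    exists P, p1, phi. split; [|split].
    + intros e'' h k Hk.
      assert (Heq : sigma e \o h = fmap R f \o (fmap R (c \o k) \o sigma e'')).
      { rewrite Ns, <- Hk, HLv, !fmap_comp, !comp_assoc. reflexivity. }
      destruct (Huniv e'' h _ Heq) as [m [[Hm1 Hm2] Hmu]].
      exists m. split; [split|].
      * exact Hm1.
      * assert (H1 : c \o fmap L m = c \o k).
        { unfold c at 1. rewrite <- comp_assoc, <- fmap_comp, Hm2, (transp_inj _ _ _ _ _ _ Hadj).
          reflexivity. }
        rewrite <- (comp_id_l (fmap L m)), <- Hc1, <- comp_assoc, H1,
          comp_assoc, Hc1, comp_id_l. reflexivity.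
      * intros m' [H1 H2]. apply Hmu. split; [exact H1|].
        rewrite <- (transp_eq _ _ _ _ _ _ Hadj _ _ (p2 \o m')). f_equal. f_equal.
        unfold c. rewrite <- H2, fmap_comp, comp_assoc. reflexivity.
    + exists c. split; assumption.
    + rewrite HLv, <- comp_assoc, Hc2, comp_id_r. reflexivity.
Qed.
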